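(* Let $\{(X_s,\tau_s):s\in S\}$ be a family of fuzzifying topological spaces, $X=\prod_{s\in S}X_s$, and let $\Pi=\prod_{s\in S}(\tau_P)_s\in\Im(P(X))$ be the product pre-open family described below. Then $$\sup_{U\subseteq X}\min\Big(\Gamma(U,\Pi/U),\ \sup_{x\in X}N^\Pi_x(U)\Big)\ \le\ \sup_{T\subseteq S,\ T\text{ finite}}\ \inf_{t\in S\setminus T}\Gamma(X_t,(\tau_P)_t).$$
   Context: Fuzzy subsets of $Y$ are maps $Y\to[0,1]$ ($\Im(Y)$); $P(X)$ is the power set. A fuzzifying topology on a set $Z$ is $\tau\in\Im(P(Z))$ with $\tau(Z)=1$, closed (in degree) under finite intersections ($\tau(A\cap B)\ge\min$) and arbitrary unions ($\tau(\bigcup A_\lambda)\ge\inf$). For such $\tau$: $N_x(A)=\sup_{x\in B\subseteq A}\tau(B)$, $Cl(A)(x)=1-N_x(Z\setminus A)$, for $\mu\in\Im(Z)$ $Int(\mu)(x)=\sup_{x\in B}\min(\tau(B),\inf_{y\in B}\mu(y))$, and the fuzzifying pre-open sets are $\tau_P(A)=\inf_{x\in A}Int(Cl(A))(x)$. For the product: $p_s:X\to X_s$ are projections, $\varphi=\{p_s^{-1}(U_s):s\in S,U_s\subseteq X_s\}$; a finite $\Phi\subseteq\varphi$ is written $\Phi=\{p_s^{-1}(V_s):s\in S(\Phi)\}$; $\beta_P(V)=\sup\{\inf_{s\in S(\Phi)}(\tau_P)_s(V_s):\Phi\subseteq\varphi\text{ finite},\ \bigcap\Phi=V\}$, and $\Pi(A)=\sup\{\inf_\lambda\beta_P(B_\lambda):\bigcup_\lambda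 B_\lambda=A\}$. $N^\Pi_x(U)=\sup_{x\in V\subseteq U}\Pi(V)$. For $U\subseteq X$, $(\Pi/U)(B)=\sup\{\Pi(V):V\cap U=B\}$. Compactness degree: for a set $A$ and $\rho\in\Im(P(A))$, with $K(\Re,A)=\inf_{x\in A}\sup_{B\ni x}\Re(B)$, $[\Re\subseteq\rho]=\inf_B\min(1,1-\Re(B)+\rho(B))$, $\wp\le\Re$ meaning pointwise $\le$, and $FF(\wp)=1-\inf\{\delta\in[0,1]:\{B:\wp(B)>\delta\}\text{ finite}\}$, set $\Gamma(A,\rho)=\inf_{\Re\in\Im(P(A))}\min\big(1,1-\max(0,K(\Re,A)+[\Re\subseteq\rho]-1)+\sup_{\wp\le\Re}\max(0,K(\wp,A)+FF(\wp)-1)\big)$. Thus $\Gamma(X_t,(\tau_P)_t)$ is the degree of fuzzifying strong compactness of $(X_t,\tau_t)$. *)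

(* Defs.v *)
(* membership degrees are reals of an arbitrary realType R
   (all properties only use values in [0,1]). *)
From HB Require Import structures.
From mathcomp Require Import all_boot all_order all_algebra.
From mathcomp Require Import all_classical all_reals.
Set Implicit Arguments.
Unset Strict Implicit.
Unset Printing Implicit Defensive.
Import Order.TTheory GRing.Theory Num.Theory.
Local Open Scope classical_set_scope.
Local Open Scope ring_scope.

Section FuzzyDefs.
Variable R : realType.

(* Supremum / infimum in [0,1]: sup of the empty set is 0, inf of the empty set is 1. *)
Definition fsup (A : set R) : R := sup (A `|` [set 0]).
Definition finf (A : set R) : R := inf (A `|` [set 1]).

Definition is_fuzzy (T : Type) (f : T -> R) : Prop := forall x, 0 <= f x <= 1.

Definition fuzzifying_topology (Z : Type) (tau : set Z -> R) : Prop :=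
  [/\ is_fuzzy tau,
      tau setT = 1,
      (forall A B : set Z, Num.min (tau A) (tau B) <= tau (A `&` B)) &
      (forall F : set (set Z), finf (tau @` F) <= tau (\bigcup_(A in F) A))].

Section OneSpace.
Variables (Z : Type) (tau : set Z -> R).

Definition fnbhd (x : Z) (A : set Z) : R :=
  fsup [set tau B | B in [set B : set Z | B x /\ B `<=` A]].

Definition fclosure (A : set Z) (x : Z) : R := 1 - fnbhd x (~` A).

Definition finterior (mu : Z -> R) (x : Z) : R :=
  fsup [set Num.min (tau B) (finf (mu @` B)) | B in [set B : set Z | B x]].

Definition preopen (A : set Z) : R :=
  finf [set finterior (fclosure A) x | x in A].
End OneSpace.

Section Product.
Variables (S : Type) (Xs : S -> Type) (tau : forall s, set (Xs s) -> R).

Definition prodX := forall s, Xs s.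

(* beta_P(V): sup over finite Phi = {p_s^{-1}(V_s) : s in S(Phi)} with
   intersection V of inf_{s in S(Phi)} (tau_P)_s(V_s). *)
Definition betaP (V : set prodX) : R :=
  fsup [set r | exists (T : set S) (W : forall s, set (Xs s)),
          [/\ finite_set T,
              [set x : prodX | forall s, T s -> W s (x s)] = V &
              r = finf [set preopen (@tau i) (W i) | i in T]]].

Definition PiP (A : set prodX) : R :=
  fsup [set finf (betaP @` F) | F in [set F : set (set prodX) |
                                       \bigcup_(B in F) B = A]].

Definition nbhdPi (x : prodX) (U : set prodX) : R := fnbhd PiP x U.

(* (Pi/U)(B) = sup {Pi(V) : V cap U = B}  (only used for B subset of U) *)
Definition PiRestr (U : set prodX) (B : set prodX) : R :=
  fsup [set PiP V | V in [set V : set prodX | V `&` U = B]].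
End Product.

Section Compactness.
Variables (T : Type) (A : set T).
(* fuzzy families on P(A) are represented by maps set T -> R;
   only their values on subsets of A are ever used. *)

Definition Kdeg (Re : set T -> R) : R :=
  finf [set fsup [set Re B | B in [set B : set T | B `<=` A /\ B x]] | x in A].

Definition incl_deg (Re rho : set T -> R) : R :=
  finf [set Num.min 1 (1 - Re B + rho B) | B in [set B : set T | B `<=` A]].

Definition FFdeg (P : set T -> R) : R :=
  1 - finf [set d | 0 <= d <= 1 /\
                    finite_set [set B : set T | B `<=` A /\ d < P B]].

Definition Gamma (rho : set T -> R) : R :=
  finf [set Num.min 1 (1 - Num.max 0 (Kdeg Re + incl_deg Re rho - 1)
          + fsup [set Num.max 0 (Kdeg P + FFdeg P - 1) |
                  P in [set P : set T -> R | is_fuzzy P /\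
                        (forall B, B `<=` A -> P B <= Re B)]])
        | Re in [set Re : set T -> R | is_fuzzy Re]].
End Compactness.
End FuzzyDefs.

(* Main.v *)
Require Import Defs.
From HB Require Import structures.
From mathcomp Require Import all_boot all_order all_algebra.
From mathcomp Require Import all_classical all_reals.
From mathcomp Require Import lra.
Import Order.TTheory GRing.Theory Num.Theory.
Local Open Scope classical_set_scope.
Local Open Scope ring_scope.

Section Aux.
Variable R : realType.
Implicit Types A : set R.

Lemma fsup_ub A (M a : R) : (forall b, A b -> b <= M) -> A a -> a <= fsup A.
Proof.
move=> hM Aa; rewrite /fsup; apply: (ub_le_sup); last by left.
exists (Num.max M 0) => b [/hM bM|->]; rewrite le_max ?bM ?lexx ?orbT //.
Qed.

Lemma fsup_le A (M : R) : (forall b, A b -> b <= M) -> 0 <= M -> fsup A <= M.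
Proof.
move=> hM M0; rewrite /fsup; apply: ge_sup; first by exists 0; right.
by move=> b [/hM|->].
Qed.

Lemma fsup_ge0 A : 0 <= fsup A.
Proof.
rewrite /fsup; case: (pselect (has_ubound (A `|` [set 0]))) => h.
  by apply: ub_le_sup => //; right.
by rewrite sup_out // => -[].
Qed.

Lemma fsup_gt0 A : 0 < fsup A -> exists2 a, A a & 0 < a.
Proof.
move=> h; apply: contrapT => hn.
have : fsup A <= 0.
  apply: fsup_le => // b Ab; rewrite leNgt; apply/negP => b0; apply: hn; by exists b.
by rewrite leNgt h.
Qed.

Lemma finf_le1 A : finf A <= 1.
Proof.
rewrite /finf; case: (pselect (has_lbound (A `|` [set 1]))) => h.
  by apply: ge_inf => //; right.
by rewrite inf_out // => -[].
Qed.

Lemma finf_lb A (m : R) : (forall b, A b -> m <= b) -> m <= 1 -> m <= finf A.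
Proof.
move=> hm m1; rewrite /finf; apply: lb_le_inf; first by exists 1; right.
by move=> b [/hm|->].
Qed.

Lemma finf_le A (m a : R) : (forall b, A b -> m <= b) -> A a -> finf A <= a.
Proof.
move=> hm Aa; rewrite /finf; apply: ge_inf; last by left.
exists (Num.min m 1) => b [/hm bm|->]; rewrite ge_min ?bm ?lexx ?orbT //.
Qed.

Lemma term_mono (k1 k2 i1 i2 s1 s2 : R) : k1 <= k2 -> i1 <= i2 -> s2 <= s1 ->
  Num.min 1 (1 - Num.max 0 (k2 + i2 - 1) + s2) <=
  Num.min 1 (1 - Num.max 0 (k1 + i1 - 1) + s1).
Proof.
move=> hk hi hs; rewrite le_min ge_min lexx /= ge_min; apply/orP; right.
have : Num.max 0 (k1 + i1 - 1) <= Num.max 0 (k2 + i2 - 1).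
  rewrite ge_max le_max lexx /= le_max; apply/orP; right; lra.
lra.
Qed.

Lemma term_ge0 (k i s : R) : k <= 1 -> i <= 1 -> 0 <= s ->
  0 <= Num.min 1 (1 - Num.max 0 (k + i - 1) + s).
Proof.
move=> hk hi hs; rewrite le_min ler01 /=.
have : Num.max 0 (k + i - 1) <= 1 by rewrite ge_max ler01 /=; lra.
lra.
Qed.

End Aux.
Arguments finf_le {R A} m {a}.
Arguments fsup_ub {R A} M {a}.
Arguments fsup_le {R A} M.
Arguments fsup_ge0 {R A}.
Arguments fsup_gt0 {R A}.
Arguments finf_le1 {R A}.
Arguments finf_lb {R A} m.
Arguments term_mono {R k1 k2 i1 i2 s1 s2}.
Arguments term_ge0 {R k i s}.

Lemma FF_le1 (R : realType) T (A : set T) (P : set T -> R) : FFdeg A P <= 1.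
Proof.
rewrite /FFdeg; have : 0 <= finf [set d : R | 0 <= d <= 1 /\
   finite_set [set B : set T | B `<=` A /\ d < P B]].
  by apply: finf_lb => // b [/andP[]].
lra.
Qed.

Lemma term_ge0' (R : realType) T (A : set T) (rho Re : set T -> R) :
  0 <= Num.min 1 (1 - Num.max 0 (Kdeg A Re + incl_deg A Re rho - 1)
          + fsup [set Num.max 0 (Kdeg A P + FFdeg A P - 1) |
                  P in [set P : set T -> R | is_fuzzy P /\
                        (forall B, B `<=` A -> P B <= Re B)]]).
Proof. by apply: term_ge0; rewrite ?finf_le1 ?fsup_ge0. Qed.

Section Image.
Variables (R : realType) (T1 T2 : Type) (A : set T1) (f : T1 -> T2)
  (rho1 : set T1 -> R) (rho2 : set T2 -> R).
Hypothesis fsurj : forall y, exists2 x, A x & f x = y.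
Hypothesis hcont : forall W, rho2 W <= rho1 (A `&` f @^-1` W).
Hypothesis rho1_ge0 : forall C, 0 <= rho1 C.
Hypothesis rho2_ge0 : forall W, 0 <= rho2 W.

Let CW (W : set T2) := A `&` f @^-1` W.

Lemma imCW W : f @` CW W = W.
Proof.
apply/seteqP; split => [y [x [_ Wfx] <-] //|y Wy].
by have [x Ax fxy] := fsurj y; exists x => //; split => //; rewrite /= fxy.
Qed.

Lemma CW_inj W1 W2 : CW W1 = CW W2 -> W1 = W2.
Proof. by move=> e; rewrite -[W1]imCW e imCW. Qed.

Let Re' (Re : set T2 -> R) (C : set T1) : R :=
  if pselect (exists W, C = CW W) then Re (f @` C) else 0.

Lemma Re'CW Re W : Re' Re (CW W) = Re W.
Proof.
rewrite /Re'; case: pselect => [h|n]; first by rewrite imCW.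
by exfalso; apply: n; exists W.
Qed.

Lemma Re'N Re C : ~ (exists W, C = CW W) -> Re' Re C = 0.
Proof. by rewrite /Re'; case: pselect. Qed.

Lemma Re'_fuzzy Re : is_fuzzy Re -> is_fuzzy (Re' Re).
Proof. by move=> hR C; rewrite /Re'; case: pselect => h; [exact: hR|rewrite lexx ler01]. Qed.

Lemma Kdeg_img Re : is_fuzzy Re -> Kdeg setT Re <= Kdeg A (Re' Re).
Proof.
move=> hR; apply: finf_lb; last exact: finf_le1.
move=> _ [x Ax <-].
apply: (@le_trans _ _ (fsup [set Re W | W in [set W : set T2 | W `<=` setT /\ W (f x)]])).
  apply: (finf_le 0); first by move=> _ [y _ <-]; exact: fsup_ge0.
  by exists (f x).
apply: fsup_le; last exact: fsup_ge0.
move=> _ [W [_ Wfx] <-]; rewrite -Re'CW.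
apply: (fsup_ub 1); first by move=> _ [B _ <-]; case/andP: (Re'_fuzzy Re hR B).
by exists (CW W) => //; split => //; apply: subIsetl.
Qed.

Lemma incl_img Re : is_fuzzy Re -> incl_deg setT Re rho2 <= incl_deg A (Re' Re) rho1.
Proof.
move=> hR; apply: finf_lb; last exact: finf_le1.
move=> _ [C CA <-].
case: (pselect (exists W, C = CW W)) => [[W ->]|n].
  rewrite Re'CW.
  apply: (@le_trans _ _ (Num.min 1 (1 - Re W + rho2 W))).
    apply: (finf_le 0); last by exists W.
    move=> _ [B _ <-]; rewrite le_min ler01 /=; have := hR B; have := rho2_ge0 B.
    move=> ? /andP[? ?]; lra.
  rewrite le_min ge_min lexx /= ge_min; apply/orP; right.
  have := hcont W; rewrite /CW; lra.
rewrite Re'N // subr0 (_ : Num.min _ _ = 1) ?finf_le1 //.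
by apply/min_idPl; have := rho1_ge0 C; lra.
Qed.

Lemma S_img Re (P' : set T1 -> R) : is_fuzzy Re -> is_fuzzy P' ->
  (forall B, B `<=` A -> P' B <= Re' Re B) ->
  exists2 P : set T2 -> R, is_fuzzy P /\ (forall B, B `<=` setT -> P B <= Re B) &
    Num.max 0 (Kdeg A P' + FFdeg A P' - 1) <= Num.max 0 (Kdeg setT P + FFdeg setT P - 1).
Proof.
move=> hR hP hPR; exists (fun W => P' (CW W)).
  split => [W|W _]; first exact: hP.
  by rewrite -(Re'CW Re W); apply: hPR; apply: subIsetl.
rewrite ge_max le_max lexx /= le_max; apply/orP; right.
have hK : Kdeg A P' <= Kdeg setT (fun W => P' (CW W)).
  apply: finf_lb; last exact: finf_le1.
  move=> _ [y _ <-]; have [x Ax fxy] := fsurj y.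
  apply: (@le_trans _ _ (fsup [set P' B | B in [set B : set T1 | B `<=` A /\ B x]])).
    apply: (finf_le 0); first by move=> _ [z _ <-]; exact: fsup_ge0.
    by exists x.
  apply: fsup_le; last exact: fsup_ge0.
  move=> _ [C [CA Cx] <-].
  case: (pselect (exists W, C = CW W)) => [[W eC]|n].
    apply: (fsup_ub 1); first by move=> _ [B _ <-]; case/andP: (hP (CW B)).
    exists W => //; rewrite -?eC //; split => //.
    by rewrite -fxy; move: Cx; rewrite eC => -[].
  have := hPR _ CA; rewrite Re'N // => h; exact: le_trans h fsup_ge0.
have hF : FFdeg A P' <= FFdeg setT (fun W => P' (CW W)).
  rewrite /FFdeg lerD2l lerN2.
  apply: finf_lb; last exact: finf_le1.
  move=> d [d01 fin]; apply: (finf_le 0); first by move=> b [/andP[]].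
  split => //.
  have -> : [set B : set T2 | B `<=` setT /\ d < P' (CW B)] =
      CW @^-1` [set B : set T1 | B `<=` A /\ d < P' B].
    apply/seteqP; split => [W [_ h]|W [_ h]] //; split => //; apply: subIsetl.
  by apply: finite_preimage => // W1 W2 _ _; exact: CW_inj.
lra.
Qed.

Lemma Gamma_img : Gamma A rho1 <= Gamma setT rho2.
Proof.
apply: finf_lb; last exact: finf_le1.
move=> _ [Re hR <-].
apply: le_trans.
  apply: (finf_le 0); first by move=> _ [Q _ <-]; exact: term_ge0'.
  by exists (Re' Re) => //; exact: Re'_fuzzy.
apply: term_mono.
- exact: Kdeg_img.
- exact: incl_img.
- apply: fsup_le; last exact: fsup_ge0.
  move=> _ [P' [hP' hP'R] <-].
  have [P hP hle] := @S_img Re P' hR hP' hP'R.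
  apply: le_trans hle _; apply: (fsup_ub 1); last by exists P.
  move=> _ [Q _ <-]; rewrite ge_max ler01 /=.
  have : Kdeg [set: T2] Q <= 1 by exact: finf_le1.
  have := @FF_le1 R T2 setT Q.
  lra.
Qed.
End Image.


Definition upd (S : Type) (Xs : S -> Type) (x : prodX Xs) (t : S) (y : Xs t) : prodX Xs :=
  fun s => match pselect (t = s) with left e => eq_rect t Xs y s e | right _ => x s end.
Arguments upd {S Xs} x t y.

Lemma upd_eq S Xs (x : prodX Xs) (t : S) y : upd x t y t = y.
Proof.
rewrite /upd; case: pselect => [e|n]; last by [].
by rewrite (Prop_irrelevance e erefl).
Qed.

Lemma upd_neq S Xs (x : prodX Xs) (t s : S) y : s <> t -> upd x t y s = x s.
Proof. by move=> st; rewrite /upd; case: pselect => [e|n] //; exfalso; apply: st. Qed.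

Lemma preopen_ge0 (R : realType) Z (tau : set Z -> R) W : 0 <= preopen tau W.
Proof. by apply: finf_lb => // _ [z _ <-]; exact: fsup_ge0. Qed.

Lemma PiP_le1 (R : realType) S (Xs : S -> Type) (tau : forall s, set (Xs s) -> R) V :
  PiP tau V <= 1.
Proof. by apply: fsup_le => // _ [F _ <-]; exact: finf_le1. Qed.

Lemma betaP_le1 (R : realType) S (Xs : S -> Type) (tau : forall s, set (Xs s) -> R) V :
  betaP tau V <= 1.
Proof. by apply: fsup_le => // r [T [W [_ _ ->]]]; exact: finf_le1. Qed.

Lemma cont (R : realType) S (Xs : S -> Type) (tau : forall s, set (Xs s) -> R)
  (t : S) (x0 : prodX Xs) (U : set (prodX Xs)) (W : set (Xs t)) :
  preopen (tau t) W <= PiRestr tau U (U `&` (fun z : prodX Xs => z t) @^-1` W).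
Proof.
set V := (fun z : prodX Xs => z t) @^-1` W.
apply: le_trans (_ : PiP tau V <= _); last first.
  apply: (fsup_ub 1); first by move=> _ [V' _ <-]; exact: PiP_le1.
  by exists V => //; rewrite setIC.
apply: le_trans (_ : betaP tau V <= _); last first.
  apply: (fsup_ub 1); first by move=> _ [F _ <-]; exact: finf_le1.
  exists [set V]; first by rewrite /= bigcup_set1.
  rewrite image_set1; apply/eqP; rewrite eq_le; apply/andP; split.
    by apply: (finf_le 0) => // b ->; exact: fsup_ge0.
  by apply: finf_lb; [move=> b ->|exact: betaP_le1].
set W' := fun s => (fun z : prodX Xs => z s) @` V.
have W't : W' t = W.
  apply/seteqP; split => [y [z Vz <-] //|y Wy].
  by exists (upd x0 t y); rewrite /V /= upd_eq.
apply: le_trans (_ : finf [set preopen (tau i) (W' i) | i in [set t]] <= _).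
  apply: finf_lb; last exact: finf_le1.
  by move=> _ [i -> <-]; rewrite W't.
apply: (fsup_ub 1); first by move=> r [T [W0 [_ _ ->]]]; exact: finf_le1.
exists [set t], W'; split; [exact: finite_set1| |by []].
apply/seteqP; split => [z hz|z Vz s ->].
  by move: (hz t erefl); rewrite W't.
by exists z.
Qed.

Theorem theorem3p2 (R : realType) (S : Type) (Xs : S -> Type)
  (tau : forall s : S, set (Xs s) -> R)
  (htau : forall s : S, fuzzifying_topology (tau s)) :
  fsup [set Num.min (Gamma U (PiRestr tau U))
                    (fsup [set nbhdPi tau x U | x in [set: prodX Xs]])
       | U in [set: set (prodX Xs)]]
  <= fsup [set finf [set Gamma [set: Xs t] (preopen (tau t)) | t in ~` T]
          | T in [set T : set S | finite_set T]].
Proof.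
apply: fsup_le; last exact: fsup_ge0.
move=> _ [U _ <-].
set g := Gamma U _; set n := fsup _.
case: (leP (Num.min g n) 0) => [h0|hpos]; first exact: le_trans h0 fsup_ge0.
have npos : 0 < n by apply: lt_le_trans hpos _; rewrite ge_min lexx orbT.
have [_ [x _ <-] hx] := fsup_gt0 npos.
have [_ [V [Vx VU] <-] hV] := fsup_gt0 hx.
have [_ [F hF <-] hFp] := fsup_gt0 hV.
have : (\bigcup_(B in F) B) x by rewrite hF.
case=> B FB Bx.
have hB : 0 < betaP tau B.
  apply: lt_le_trans hFp _; apply: (finf_le 0); last by exists B.
  by move=> _ [C _ <-]; exact: fsup_ge0.
have [r [T [W0 [finT hbox ->]]] _] := fsup_gt0 hB.
apply: (@le_trans _ _ (finf [set Gamma [set: Xs t] (preopen (tau t)) | t in ~` T])).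
  apply: (@le_trans _ _ g); first by rewrite ge_min lexx.
  apply: finf_lb; last exact: finf_le1.
  move=> _ [t nTt <-].
  apply: (@Gamma_img R _ _ U (fun z : prodX Xs => z t)).
  - move=> y; exists (upd x t y); last exact: upd_eq.
    apply: VU; rewrite -hF; exists B => //.
    rewrite -hbox => s Ts; rewrite upd_neq; last by move=> st; apply: nTt; rewrite -st.
    by move: Bx; rewrite -hbox; apply.
  - by move=> W; exact: cont x U W.
  - by move=> C; exact: fsup_ge0.
  - by move=> W; exact: preopen_ge0.
apply: (fsup_ub 1); first by move=> _ [T' _ <-]; exact: finf_le1.
by exists T.
Qed.
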